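(* Let $n\ge1$, let $X=\{x_1,\dots,x_n\}$, and let $$W=\{x_ix_jx_k,\ x_ix_kx_j,\ x_ix_jx_ix_k : i>j>k\}\cup\{x_ix_jx_j,\ x_ix_ix_j : i>j\}\subseteq X^*.$$ Let $Q_W$ be the Ufnarovskiĭ graph of $W$ and $W^{(i)}$ the set of $i$-chains, as described in the context. Then: (a) $|W^{(\frac{n(n+1)}2-1)}|=1$, and the unique element of $W^{(\frac{n(n+1)}2-1)}$ has maximal degree among all Anick chains. (b) $W^{(m)}=\emptyset$ for all $m\ge\frac{n(n+1)}2$. (c) $Q_W$ is a finite quiver without oriented cycles. (d) Each $W^{(i)}$ is a finite set.
   Context: $X^*$ is the free monoid on $X$, with empty word $1$. $W$ is the set of leading words of the Gröbner–Shirshov basis of the Chinese algebra of rank $n$, with respect to the length-lexicographic order with $x_n>\dots>x_1$; it is given explicitly in the statement. The Ufnarovskiĭ graph $Q_W$: - Its vertex set is $\{1\}\cup X\cup\{u: u$ is a nonempty proper right factor (suffix) of some element of $W\}$. - It has arrows $1\to x_i$ for each $i$. - It has arrows $u\to v$ between nonempty words whenever the word $uv$ contains some element of $W$ as a factor, but no proper left factor (prefix) of $uv$ does. Chains: - For $i\ge0$, an $i$-chain (Anick chain) is a sequence $(v_1,\dots,v_{i+1})$ of nonempty words such that $1\to v_1\to\cdots\to v_{i+1}$ is a path in $Q_W$. $W^{(i)}$ is the set of $i$-chains, and $W^{(-1)}$ consists of the single empty chain. - The degree of a chain $(v_1,\dots,v_{i+1})$ is the length of the word $v_1\cdots v_{i+1}$;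 its weight is $i+1$. *)

(* Defs.v *)
(* Words over X = {x_1,...,x_n} are modelled as seq 'I_n,
   with the letter x_{i+1} represented by the ordinal i : 'I_n, so that the
   order x_n > ... > x_1 is the order of the ordinals' values. *)
From mathcomp Require Import all_boot.
Set Implicit Arguments. Unset Strict Implicit. Unset Printing Implicit Defensive.

Definition word (n : nat) := seq 'I_n.

Definition inW (n : nat) (w : word n) : Prop :=
  (exists i j k : 'I_n, (j < i)%N /\ (k < j)%N /\
     (w = [:: i; j; k] \/ w = [:: i; k; j] \/ w = [:: i; j; i; k]))
  \/
  (exists i j : 'I_n, (j < i)%N /\ (w = [:: i; j; j] \/ w = [:: i; i; j])).

Definition containsW (n : nat) (u : word n) : Prop :=
  exists a w b : word n, inW w /\ u = a ++ w ++ b.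

Definition vertex (n : nat) (u : word n) : Prop :=
  u = [::] \/ size u = 1 \/
  (u <> [::] /\ exists w p : word n, inW w /\ p <> [::] /\ w = p ++ u).

Definition arrow (n : nat) (u v : word n) : Prop :=
  (u = [::] /\ size v = 1)
  \/
  (u <> [::] /\ v <> [::] /\ vertex u /\ vertex v /\
   containsW (u ++ v) /\
   forall k, (k < size (u ++ v))%N -> ~ containsW (take k (u ++ v))).

(* i-chains (Anick chains): (v_1,...,v_{i+1}) nonempty words such that
   1 -> v_1 -> ... -> v_{i+1} is a path in Q_W *)
Definition chain (n : nat) (i : nat) (c : seq (word n)) : Prop :=
  size c = i.+1 /\ (forall v, v \in c -> v <> [::]) /\
  forall k, (k < size c)%N -> arrow (nth [::] ([::] :: c) k) (nth [::] c k).

Definition degree (n : nat) (c : seq (word n)) : nat := size (flatten c).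

(* Main.v *)
Require Import Defs.
From mathcomp Require Import all_boot zify.
From Stdlib Require Import ClassicalEpsilon.
Set Implicit Arguments. Unset Strict Implicit. Unset Printing Implicit Defensive.

Definition isW (s : seq nat) : bool :=
  match s with
  | [:: i; j; k] => [|| (j < i) && (k < j), (k < i) && (j < k), (j < i) && (j == k) | (i == j) && (k < i)]
  | [:: i; j; i'; k] => [&& i' == i, j < i & k < j]
  | _ => false
  end.
Definition isV (n : nat) (s : seq nat) : bool :=
  match s with
  | [::] => true | [:: a] => true
  | [:: a; b] => [|| b < a, (a < b) && (b.+1 < n) | (a == b) && (a.+1 < n)]
  | [:: j; i; k] => (j < i) && (k < j)
  | _ => false
  end.
Definition mx (s : seq nat) := foldr maxn 0 s.
Definition lst (s : seq nat) := last 0 s.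
Definition canonb (s : seq nat) := match s with [:: a] => true | [:: a; b] => b < a | _ => false end.
Definition nextN (s : seq nat) := match s with
  | [:: a] => [:: a; a.-1] | [:: a; 0] => [:: a.-1] | [:: a; b.+1] => [:: a; b] | _ => [::] end.
Definition imm (s t : seq nat) :=
  ((mx t == mx s) && ((lst t).+1 == lst s)) || [&& (mx t).+1 == mx s, lst s == 0 & lst t == mx t].
Fixpoint tri m := if m is m'.+1 then tri m' + m'.+1 else 0.
Definition phiN (s : seq nat) := tri (mx s) + lst s + 1.
Definition psiN (s : seq nat) := mx s * mx s + 2 * lst s.

Lemma keyN n s t k : isV n s -> isV n t -> s != [::] -> t != [::] -> k < size s ->
  isW (drop k s ++ t) ->
  [&& (mx t < mx s) || ((mx t == mx s) && (lst t < lst s)),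
      ((mx t < mx s) && (2 * lst t + size t <= 2 * mx t + 1 + 2 * lst s)) ||
      ((mx t == mx s) && (2 * lst t + size t <= 2 * lst s)) &
      (canonb s && imm s t) ==> (t == nextN s)].
Proof.
case: s => [|x [|y [|z [|? ?]]]] //; case: t => [|d [|e [|f [|? ?]]]] //;
case: k => [|[|[|k]]] //.
all: try (case: y => [|y]).
all: rewrite /imm /mx /lst /= ?eqseq_cons ?andbT /=; lia.
Qed.

Lemma tri_mono m M : m <= M -> tri m <= tri M.
Proof.
elim: M => [|M IH]; first by rewrite leqn0 => /eqP ->.
rewrite leq_eqVlt => /orP [/eqP ->|H] //.
have := IH H; rewrite /=; lia.
Qed.

Lemma tri_eq n : n * (n + 1) %/ 2 = tri n.
Proof.
have H : n * (n + 1) = tri n * 2.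
  elim: n => [|n IH] //=. rewrite mulnDl -IH. lia.
by rewrite H mulnK.
Qed.

Lemma phi_lem M l m l' : l <= M -> l' <= m -> (m < M) || (m == M) && (l' < l) ->
  tri m + l' + 1 < tri M + l + 1 /\
  ((tri m + l' + 1).+1 = tri M + l + 1 ->
     ((m == M) && (l'.+1 == l)) || [&& m.+1 == M, l == 0 & l' == m]).
Proof.
move=> HlM Hlm /orP [Hlt|/andP [/eqP Em Hl]].
  have T1 := tri_mono Hlt; rewrite /= in T1.
  split; first lia.
  case E: (m.+1 == M); first by move: E => /eqP E; subst M => /=; lia.
  have Hlt2 : m.+2 <= M by lia.
  have T2 := tri_mono Hlt2; rewrite /= in T2. lia.
subst m; split; first lia. lia.
Qed.

Lemma lst_mx s : lst s <= mx s.
Proof.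
rewrite /lst /mx; case: s => [|x s] //=.
elim: s x => [|y s IH] x /=; first lia.
have := IH y; lia.
Qed.

Lemma psi_lem M l m l' sz : (m < M) && (2 * l' + sz <= 2 * m + 1 + 2 * l) || (m == M) && (2 * l' + sz <= 2 * l) ->
  m * m + 2 * l' + sz <= M * M + 2 * l.
Proof.
case/orP => [/andP [H1 H2]|/andP [/eqP -> H]]; last lia.
have := leq_mul H1 H1. nia.
Qed.


Lemma isV_noW n t j : isV n t -> ~~ isW (drop j t).
Proof.
case: t => [|d [|e [|f [|? ?]]]] //; case: j => [|[|[|[|j]]]] //=; lia.
Qed.

Lemma canon_next s : canonb s -> 2 <= phiN s -> canonb (nextN s) /\ (phiN (nextN s)).+1 = phiN s
   /\ psiN s = psiN (nextN s) + size (nextN s).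
Proof.
rewrite /phiN /psiN /mx /lst.
case: s => [|a [|b [|? ?]]] //=.
  case: a => [|a] //= _ _. rewrite (_ : maxn a.+1 (maxn a 0) = a.+1); last lia.
  rewrite (_ : maxn a.+1 0 = a.+1); last lia. rewrite /=. split; first lia. split; first lia. nia.
case: b => [|b] /= Hb _.
  case: a Hb => [|a] //= _. rewrite (_ : maxn a.+1 (maxn 0 0) = a.+1); last lia.
  rewrite (_ : maxn a 0 = a); last lia. rewrite /=. split => //; split; first lia. nia.
rewrite (_ : maxn a (maxn b 0) = a); last lia.
rewrite (_ : maxn a (maxn b.+1 0) = a); last lia.
split; first lia. split; first lia. nia.
Qed.

Lemma canon_W s : canonb s -> 2 <= phiN s -> isW (s ++ nextN s) /\
   forall k, k < size (s ++ nextN s) -> ~~ isW (take k (s ++ nextN s)).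
Proof.
rewrite /phiN /mx /lst.
case: s => [|a [|b [|? ?]]] //=.
  case: a => [|a] //= _ _. split; first lia. case=> [|[|[|[|k]]]] //=.
case: b => [|b] /= Hb _.
  case: a Hb => [|a] //= _. split; first lia. case=> [|[|[|[|k]]]] //=.
split; first lia. case=> [|[|[|[|k]]]] //=; lia.
Qed.

Lemma canon_one s : canonb s -> phiN s = 1 -> s = [:: 0].
Proof.
rewrite /phiN /mx /lst; case: s => [|a [|b [|? ?]]] //=.
  case: a => [|a] //= _ H; exfalso; lia.
move=> Hb. rewrite (_ : maxn a (maxn b 0) = a); last lia.
case: a Hb => [|a] //= _ H; exfalso; lia.
Qed.

Lemma isV_of_W n p t : all (fun x => x < n) (p ++ t) -> p != [::] -> t != [::] -> isW (p ++ t) -> isV n t.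
Proof.
case: p => [|x [|y [|z [|w l]]]] //; case: t => [|d [|e [|f [|? ?]]]] //=; try lia.
all: by case: l.
Qed.

Section S.
Variable n : nat.
Definition vw (u : word n) : seq nat := map val u.

Lemma vw_lt (u : word n) : all (fun x => x < n) (map val u).
Proof. by apply/allP => x /mapP [y _ ->]; apply: ltn_ord. Qed.

Lemma inW_iff (w : word n) : inW w <-> isW (vw w).
Proof.
split.
  case=> [[i [j [k [Hji [Hkj [->|[->|->]]]]]]] | [i [j [Hji [->|->]]]]] /=; rewrite ?eqxx; lia.
case: w => [|i [|j [|k [|l [|? ?]]]]] //= H; rewrite /inW.
  case/or4P: H => /andP [H1 H2].
  - left; exists i, j, k; split => //; split => //; by left.
  - left; exists i, k, j; split => //; split => //; by right; left.
  - have E : j = k by apply: val_inj; apply/eqP.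
    subst k; right; exists i, j; split => //; by left.
  - have E : i = j by apply: val_inj; apply/eqP.
    subst j; right; exists i, k; split => //; by right.
case/and3P: H => H1 H2 H3.
have E : k = i by apply: val_inj; apply/eqP.
subst k; left; exists i, j, l; split => //; split => //; by right; right.
Qed.

Lemma inW_size (w : word n) : inW w -> 3 <= size w.
Proof.
by case=> [[i [j [k [_ [_ [->|[->|->]]]]]]] | [i [j [_ [->|->]]]]].
Qed.

Lemma vertex_iff (u : word n) : vertex u <-> isV n (vw u).
Proof.
split.
  case => [->|[Hs|[Hne [w [p [Hw [Hp E]]]]]]] //.
    by case: u Hs => [|a [|b ?]].
  have := Hw; rewrite inW_iff E /vw map_cat => HW.
  apply: (isV_of_W (p := map val p)) => //.
  - by rewrite -map_cat; apply: vw_lt.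
  - by case: (p) Hp.
  - by case: (u) Hne.
case: u => [|a [|b [|c [|? ?]]]] /= H; rewrite /vertex /inW.
- by left.
- by right; left.
- right; right; split => //.
  case/or3P: H => [H|/andP [H1 H2]|/andP [H1 H2]].
  + exists [:: a; a; b], [:: a]; split => //.
    right; exists a, b; split => //; by right.
  + have Ht : n.-1 < n by lia.
    exists [:: Ordinal Ht; a; b], [:: Ordinal Ht]; split => //.
    left; exists (Ordinal Ht), b, a; split; first by rewrite /=; lia.
    split => //; by right; left.
  + have Ht : n.-1 < n by lia.
    have E : a = b by apply: val_inj; apply/eqP.
    subst b.
    exists [:: Ordinal Ht; a; a], [:: Ordinal Ht]; split => //.
    right; exists (Ordinal Ht), a; split; first by rewrite /=; lia.
    by left.
- right; right; split => //.
  case/andP: H => H1 H2.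
  exists [:: b; a; b; c], [:: b]; split => //.
  left; exists b, a, c; split => //; split => //; by right; right.
- done.
Qed.

Lemma vertex_size (u : word n) : vertex u -> size u <= 3.
Proof. by move/vertex_iff; case: u => [|a [|b [|c [|? ?]]]]. Qed.

Lemma containsW_small (x : word n) : containsW x -> size x <= 3 -> inW x.
Proof.
move=> [a [w [b [Hw E]]]]; have := inW_size Hw; rewrite E !size_cat => H1 H2.
have Ha : a = [::] by case: a E H2 => // ? ? _ /=; lia.
have Hb : b = [::] by case: b E H2 => // ? ? _ /=; lia.
by subst a b; rewrite cats0.
Qed.

Lemma cont_analysis (u v : word n) : containsW (u ++ v) ->
  (forall k, k < size (u ++ v) -> ~ containsW (take k (u ++ v))) -> isV n (vw v) ->
  exists2 k, k < size u & isW (drop k (vw u) ++ vw v).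
Proof.
move=> [a [w [b [Hw E]]]] Hno HV.
have Hb : b = [::].
  case: b E => // x b E; exfalso; apply: (Hno (size (a ++ w))).
  - rewrite E !size_cat /=; lia.
  - exists a, w, [::]; split => //.
    by rewrite E catA take_size_cat // cats0.
subst b; rewrite cats0 in E.
have Ed : drop (size a) (u ++ v) = w by rewrite E drop_size_cat.
rewrite drop_cat in Ed.
case: (ltnP (size a) (size u)) Ed => Ha Ed.
  exists (size a) => //.
  rewrite /vw -map_drop -map_cat Ed; exact: (proj1 (inW_iff w) Hw).
exfalso; move: (isV_noW (size a - size u) HV).
rewrite /vw -map_drop Ed => /negP; apply; exact: (proj1 (inW_iff w) Hw).
Qed.

Fixpoint apath (u : word n) (c : seq (word n)) : Prop :=
  if c is v :: c' then arrow u v /\ apath v c' else True.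

Lemma apathE u p : (forall k, k < size p -> arrow (nth [::] (u :: p) k) (nth [::] p k)) <-> apath u p.
Proof.
elim: p u => [|v p IH] u /=; first by split.
split.
  move=> H; split; first exact: (H 0).
  by apply/IH => k Hk; apply: (H k.+1).
by case=> H1 /IH H2 [|k] //= Hk; apply: H2.
Qed.

Definition phiW (u : word n) := phiN (vw u).
Definition psiW (u : word n) := psiN (vw u).

Lemma arrow_props (u v : word n) : arrow u v -> u <> [::] ->
  [/\ v <> [::], vertex v, phiW v < phiW u,
     ((phiW v).+1 = phiW u -> canonb (vw u) -> vw v = nextN (vw u)) &
     psiW v + size v <= psiW u].
Proof.
case=> [[-> _] //|[Hu [Hv [Vu [Vv [HC Hno]]]]]] _.
have Vu' := Vu; have Vv' := Vv.
move/vertex_iff: Vu' => Vu'; move/vertex_iff: Vv' => Vv'.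
have [k Hk HW] := cont_analysis HC Hno Vv'.
have Hu' : vw u != [::] by case: (u) Hu.
have Hv' : vw v != [::] by case: (v) Hv.
have := keyN Vu' Vv' Hu' Hv' _ HW; rewrite size_map => /(_ Hk) /and3P [H1 H2 H3].
have [P1 P2] := phi_lem (lst_mx (vw u)) (lst_mx (vw v)) H1.
split => //.
- move=> E Hc. apply/eqP; move/implyP: H3; apply.
  rewrite Hc /=. apply: P2. by move: E; rewrite /phiW /phiN.
- have := psi_lem H2; rewrite /psiW /psiN size_map //.
Qed.

Lemma apath_bound u c : apath u c -> u <> [::] -> (size c).+1 <= phiW u.
Proof.
elim: c u => [|v c IH] u /=.
  by move=> _ _; rewrite /phiW /phiN; lia.
case=> Ha Hp Hu; have [Hv _ Hlt _ _] := arrow_props Ha Hu.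
have := IH v Hp Hv; lia.
Qed.

Lemma apath_deg u c : apath u c -> u <> [::] -> degree c <= psiW u.
Proof.
elim: c u => [|v c IH] u /=; first by move=> _ _; rewrite /degree.
case=> Ha Hp Hu; have [Hv _ _ _ Hpsi] := arrow_props Ha Hu.
have := IH v Hp Hv; rewrite /degree /= size_cat; lia.
Qed.

Lemma apath_canon u c : apath u c -> u <> [::] -> (size c).+1 = phiW u -> canonb (vw u) ->
  fpath nextN (vw u) (map vw c).
Proof.
elim: c u => [|v c IH] u //=.
case=> Ha Hp Hu Hs Hc; have [Hv _ Hlt Himm _] := arrow_props Ha Hu.
have Hb := apath_bound Hp Hv.
have E : (phiW v).+1 = phiW u by lia.
have Ev := Himm E Hc.
have H2 : 2 <= phiN (vw u) by rewrite -/(phiW u); lia.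
have [Cn _] := canon_next Hc H2.
apply/andP; split; first by rewrite Ev.
apply: IH => //; [lia | by rewrite Ev].
Qed.

Lemma apath_last u c : apath u c -> c <> [::] -> last u c <> [::].
Proof.
elim: c u => [|v c IH] u //= [Ha Hp] _.
case: c IH Hp => [|w c] IH Hp /=.
  by case: Ha => [[_ H] E|[_ [H _]]]; [move: H; rewrite E|].
exact: (IH v Hp).
Qed.

Lemma apath_lastphi u c : apath u c -> u <> [::] -> c <> [::] -> phiW (last u c) < phiW u.
Proof.
elim: c u => [|v c IH] u //= [Ha Hp] Hu _.
have [Hv _ Hlt _ _] := arrow_props Ha Hu.
case: c IH Hp => [|w c] IH Hp //=.
have := IH v Hp Hv ltac:(done); rewrite /=; lia.
Qed.

Lemma apath_vertex u c : apath u c -> forall v, v \in c -> vertex v.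
Proof.
elim: c u => [|w c IH] u //= [Ha Hp] v; rewrite inE => /orP [/eqP ->|Hv].
  case: Ha => [[_ H]|[_ [_ [_ [H _]]]]] //; by right; left.
exact: IH Hp v Hv.
Qed.

Lemma canon_arrow (u v : word n) : canonb (vw u) -> 2 <= phiW u -> vw v = nextN (vw u) -> arrow u v.
Proof.
move=> Hc H2 Ev; have [HW Hno] := canon_W Hc H2.
rewrite /arrow; right; split; first by case: u Hc {H2 Ev HW Hno}.
split; first by case: v Ev => //; case: (vw u) Hc => [|a [|b [|? ?]]] //; case: b.
split; first by apply/vertex_iff; case: (vw u) Hc => [|a [|b [|? ?]]] //= H; lia.
split.
  apply/vertex_iff; rewrite Ev; have [Cn _] := canon_next Hc H2.
  by case: (nextN (vw u)) Cn => [|a [|b [|? ?]]] //= H; lia.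
split.
  rewrite /containsW; exists [::], (u ++ v), [::]; split; last by rewrite cats0.
  by rewrite inW_iff /vw map_cat -/(vw u) -/(vw v) Ev.
move=> k Hk HC.
have Hs : size (take k (u ++ v)) <= 3.
  rewrite size_take Hk.
  have H4 : size (vw u ++ vw v) <= 4.
    rewrite Ev; case: (vw u) Hc => [|a [|b [|? ?]]] //=; case: b => //.
  have H4' : size (u ++ v) <= 4 by move: H4; rewrite /vw -map_cat size_map.
  exact: leq_trans Hk H4'.
have := containsW_small HC Hs; rewrite inW_iff /vw map_take map_cat -/(vw u) -/(vw v) Ev.
apply/negP; apply: Hno.
by rewrite size_cat -Ev !size_map -size_cat.
Qed.

End S.

Definition pb (P : Prop) : bool := if excluded_middle_informative P then true else false.
Lemma pbP (P : Prop) : pb P <-> P.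
Proof. by rewrite /pb; case: excluded_middle_informative. Qed.

Fixpoint tuplesOf (T : eqType) (s : seq T) (k : nat) : seq (seq T) :=
  if k is k'.+1 then [seq x :: l | x <- s, l <- tuplesOf s k'] else [:: [::]].

Lemma mem_tuplesOf (T : eqType) (s : seq T) k l :
  (l \in tuplesOf s k) = (size l == k) && all (mem s) l.
Proof.
elim: k l => [|k IH] [|x l] //=.
  apply/negP => /allpairsP [[y m] [_ _ /=]] //.
apply/allpairsP/idP => [[[y m] /= [Hy Hm [-> ->]]]|/andP [/eqP [Hs] /andP [Hx Hl]]].
  by move: Hm; rewrite IH => /andP [/eqP -> ->]; rewrite eqxx Hy.
by exists (x, l); split => //=; rewrite IH Hs eqxx.
Qed.

Lemma apath_ne n (u : word n) c : apath u c -> forall v, v \in c -> v <> [::].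
Proof.
elim: c u => [|w c IH] u //= [Ha Hp] v; rewrite inE => /orP [/eqP ->|Hv].
  by case: Ha => [[_ H] E|[_ [H _]]] //; move: H; rewrite E.
exact: IH Hp v Hv.
Qed.

Lemma chain_split n m (c : seq (word n)) : chain m c ->
  exists a : 'I_n, exists c', [/\ c = [:: a] :: c', apath [:: a] c' & size c' = m].
Proof.
case: c => [|v c'] [Hs [Hne Har]] //.
move/apathE: Har => /= [Ha Hp].
case: Ha => [[_ Hv]|[H _]] //.
case: v Hv Hp Hs Hne => [|a [|]] // _ Hp Hs _.
by exists a, c'; split => //; case: Hs.
Qed.

Lemma phi1 n (a : 'I_n) : phiW [:: a] = tri a.+1.
Proof. by rewrite /phiW /phiN /mx /lst /= maxn0 /=; lia. Qed.
Lemma psi1 n (a : 'I_n) : psiW [:: a] = a * a + 2 * a.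
Proof. by rewrite /psiW /psiN /mx /lst /= maxn0. Qed.

Lemma all_next m s : all (fun x => x <= m) s -> all (fun x => x <= m) (nextN s).
Proof. case: s => [|a [|b [|? ?]]] //=; try case: b => [|b] /=; lia. Qed.

Lemma all_traj m s k : all (fun x => x <= m) s -> all (all (fun x => x <= m)) (traject nextN (nextN s) k).
Proof.
elim: k s => [|k IH] s //= Hs.
by rewrite all_next //= IH // all_next.
Qed.

Lemma vw_inord n' (x : seq nat) : all (fun y => y <= n') x -> vw (map (@inord n') x) = x.
Proof.
elim: x => [|y x IH] //= /andP [Hy Hx].
by rewrite /vw /= inordK // -/(vw _) IH.
Qed.

Lemma vw_small n' (u : word n'.+1) : all (fun y => y <= n') (vw u).
Proof. by apply/allP => x; rewrite /vw => /mapP [y _ ->]; rewrite -ltnS; apply: ltn_ord. Qed.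

Lemma apath_traj n' k (u : word n'.+1) : canonb (vw u) -> k < phiW u ->
  apath u (map (map inord) (traject nextN (nextN (vw u)) k)).
Proof.
elim: k u => [|k IH] u //= Hc Hk.
have H2 : 2 <= phiN (vw u) by rewrite -/(phiW u); lia.
have [Cn [Pn _]] := canon_next Hc H2.
have Ev : vw (map (@inord n') (nextN (vw u))) = nextN (vw u).
  exact: (vw_inord (all_next (vw_small u))).
split; first by apply: canon_arrow => //; rewrite /phiW.
have := IH (map inord (nextN (vw u))); rewrite Ev; apply => //.
rewrite /phiW Ev; move: Hk; rewrite /phiW; lia.
Qed.

Lemma sum_traj s k : canonb s -> k.+1 = phiN s ->
  sumn (map size (traject nextN (nextN s) k)) = psiN s.
Proof.
elim: k s => [|k IH] s Hc Hk /=.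
  by rewrite (canon_one Hc (esym Hk)).
have H2 : 2 <= phiN s by lia.
have [Cn [Pn Qn]] := canon_next Hc H2.
rewrite IH //; first lia.
lia.
Qed.

Lemma tri_strict a n : a < n -> tri a.+1 < tri n.+1.
Proof. move=> H; have := tri_mono H; rewrite /=; lia. Qed.

Lemma deg_cons n (v : word n) c : degree (v :: c) = size v + degree c.
Proof. by rewrite /degree /= size_cat. Qed.
Unset Implicit Arguments.

Theorem lemma6p3 (n : nat) (hn : (1 <= n)%N) :
  let N := (n * (n + 1)) %/ 2 in
  (* (a) *)
  (exists c : seq (word n),
     chain N.-1 c /\
     (forall c', chain N.-1 c' -> c' = c) /\
     (forall (m : nat) (c' : seq (word n)), chain m c' -> (degree c' <= degree c)%N))
  /\
  (* (b) *)
  (forall m : nat, (N <= m)%N -> forall c : seq (word n), ~ chain m c)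
  /\
  (* (c) *)
  ((exists s : seq (word n), forall u, vertex u <-> u \in s) /\
   (forall (u : word n) (p : seq (word n)),
      vertex u -> p <> [::] ->
      ~ ((forall k, (k < size p)%N -> arrow (nth [::] (u :: p) k) (nth [::] p k))
         /\ last u p = u)))
  /\
  (* (d) *)
  (forall i : nat, exists s : seq (seq (word n)), forall c, chain i c <-> c \in s).
Proof.
move=> N; have EN : N = tri n by rewrite /N tri_eq.
clearbody N; subst N.
case: n hn => [//|n'] _.
set n := n'.+1.
have Etri : tri n = tri n' + n'.+1 by [].
pose allW : seq (word n) := flatten [seq tuplesOf (enum 'I_n) k | k <- iota 0 4].
pose Vs := [seq u <- allW | pb (vertex u)].
have HVs : forall u, vertex u <-> u \in Vs.
  move=> u; rewrite mem_filter; split.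
    move=> Hv; rewrite (proj2 (pbP _) Hv) /=.
    apply/flatten_mapP; exists (size u).
      by rewrite mem_iota /=; have := vertex_size Hv; lia.
    rewrite mem_tuplesOf eqxx /=; apply/allP => x _; by rewrite -[mem _ x]/(x \in enum _) mem_enum.
  by case/andP => /pbP.
split.
  pose L := traject nextN (nextN [:: n']) (tri n).-1.
  exists ([:: ord_max] :: map (map inord) L).
  have Ctop : canonb (vw [:: (@ord_max n')]) by [].
  have Ptop : phiW [:: (@ord_max n')] = tri n by rewrite phi1.
  have Htri : 1 <= tri n by rewrite /=; lia.
  have Hap : apath [:: ord_max] (map (map (@inord n')) L).
    have E1 : vw [:: (@ord_max n')] = [:: n'] by [].
    move: (apath_traj (k:=(tri n).-1) Ctop); rewrite E1 Ptop => H; apply: H; lia.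
  have HL : all (all (fun x => x <= n')) L by apply: all_traj => /=; rewrite leqnn.
  have EL : map (@vw n) (map (map (@inord n')) L) = L.
    rewrite -map_comp; elim: (L) HL => [|x l IH] //= /andP [Hx Hl].
    by rewrite vw_inord // IH.
  split.
    split; first by rewrite /= size_map size_traject; lia.
    split.
      move=> v; rewrite inE => /orP [/eqP -> //|]; exact: apath_ne Hap v.
    apply/apathE => /=; split => //; by left.
  split.
    move=> c' Hc'; have [a [c'' [Ec Hp Hs]]] := chain_split Hc'.
    have Hb := apath_bound Hp ltac:(done); rewrite phi1 Hs in Hb.
    have Ha : val a = n'.
      have := ltn_ord a; rewrite leq_eqVlt => /orP [/eqP [//]|Hlt].
      have := tri_strict (Hlt : a < n'); rewrite -/n; lia.
    have Eaa : a = ord_max by apply: val_inj.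
    subst a c'; congr cons.
    have Esz : (size c'').+1 = phiW [:: (@ord_max n')] by rewrite Ptop; lia.
    have Hf := apath_canon Hp ltac:(done) Esz Ctop.
    move/fpathP: Hf => [k Ek].
    have Ek' : k = (tri n).-1 by move: (congr1 size Ek); rewrite size_map size_traject => <-; exact: Hs.
    subst k.
    apply: (inj_map (inj_map val_inj)).
    by rewrite -/(vw _) EL; move: Ek; rewrite /vw /= /n => ->.
  move=> m c' Hc'; have [a [c'' [Ec Hp Hs]]] := chain_split Hc'.
  have Hd := apath_deg Hp ltac:(done); rewrite psi1 in Hd.
  subst c'.
  rewrite !deg_cons.
  have -> : degree (map (map (@inord n')) L) = psiN [:: n'].
    rewrite /degree size_flatten /shape -map_comp.
    have E2 : map (size \o map (@inord n')) L = map size L.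
      by apply: eq_map => x /=; rewrite size_map.
    rewrite E2; apply: sum_traj => //.
    rewrite /phiN /mx /lst /= maxn0 /=; lia.
  rewrite /psiN /mx /lst /= maxn0.
  have Ha := ltn_ord a. rewrite -/n in Ha.
  have : a * a <= n' * n' by apply: leq_mul; lia.
  lia.
split.
  move=> m Hm c Hc; have [a [c'' [Ec Hp Hs]]] := chain_split Hc.
  have Hb := apath_bound Hp ltac:(done); rewrite phi1 Hs in Hb.
  have := tri_mono (ltn_ord a); rewrite -/n; lia.
split.
  split; first by exists Vs.
  move=> u p Hu Hp [/apathE Ha Hl].
  case: (eqVneq u [::]) => [Eu|Nu].
    by apply: (apath_last Ha Hp); rewrite Hl.
  have Nu' : u <> [::] by apply/eqP.
  have := apath_lastphi Ha Nu' Hp; rewrite Hl; lia.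
move=> i.
exists [seq c <- tuplesOf Vs i.+1 | pb (chain i c)].
move=> c; rewrite mem_filter; split; last by case/andP => /pbP.
move=> Hc; rewrite (proj2 (pbP _) Hc) mem_tuplesOf /=.
case: Hc => [Hs [Hne Har]]; rewrite Hs eqxx /=.
move/apathE: Har => Har.
apply/allP => v Hv; rewrite /= -HVs.
exact: apath_vertex Har v Hv.
Qed.
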